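(* Assume Assumption A and let $\alpha>0$. For each $\delta\ge0$, the set $D_\delta$ is positively invariant under the semiflow generated by system (S), i.e. if $(\varphi,\tau_0)\in D_\delta$ then $((A_{1,t},\dots,A_{n,t}),(\tau_1(t),\dots,\tau_n(t)))\in D_\delta$ for all $t\ge0$, where $A_{i,t}(\theta):=A_i(t+\theta)$, $\theta\le0$. Moreover, for each $\delta>0$ there exists $M(\delta)>0$, independent of the initial conditions, such that for every $(\varphi,\tau_0)\in D_\delta$ with $\varphi_i\ge0$ and $\tau_{i0}>0$ for all $i$, the corresponding solution satisfies $$\limsup_{t\to+\infty}\max_{i=1,\dots,n}A_i(t)\le M(\delta).$$
   Context: For $\alpha>0$, $X_\alpha:=\{\phi\in C((-\infty,0]): e^{-\alpha|\cdot|}\phi(\cdot)\in BUC((-\infty,0])\cap \mathrm{Lip}((-\infty,0])\}$. The $n$-species system (S): for $i=1,\dots,n$, $$A_i'(t)=-\mu_{A_i}A_i(t)+\beta_i e^{-\mu_{J_i}\tau_i(t)}\frac{f_i(Z_i(t))}{f_i(Z_i(t-\tau_i(t)))}A_i(t-\tau_i(t)),\quad t\ge0,$$ $$\int_{t-\tau_i(t)}^{t}f_i(Z_i(\sigma))\,d\sigma=\int_{-\tau_{i0}}^{0}f_i(Z_{i\varphi}(\sigma))\,d\sigma,\quad t\ge0,$$ with $A_i(t)=\varphi_i(t)$ for $t\le0$, $\tau_i(0)=\tau_{i0}\ge0$, where $Z_i(t)=\sum_{j=1}^n\zeta_{ij}A_j(t)$, $Z_{i\varphi}(t)=\sum_{j=1}^n\zeta_{ij}\varphi_j(t)$,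 $\zeta_{ij}\ge0$. A solution consists of continuous $A_i:\mathbb{R}\to[0,\infty)$, differentiable on $[0,\infty)$, and $\tau_i:[0,\infty)\to[0,\infty)$ satisfying these equations for all $t\ge0$. Assumption A: for each $i$, (i) $\mu_{A_i}>0$, $\mu_{J_i}>0$, $\beta_i>0$, $\zeta_{ii}>0$; (ii) $f_i:\mathbb{R}\to(0,\infty)$ is Lipschitz continuous and continuously differentiable with $f_i>0$, $f_i'\le0$ on $\mathbb{R}$, $\lim_{x\to+\infty}f_i(x)=0$, and $\sup_{x\ge0}\frac{f_i(x)}{f_i(cx)}<+\infty$ for every $c\ge1$. For $\delta\ge0$, $D_\delta:=\{(\varphi,\tau_0)\in X_\alpha^n\times[0,+\infty)^n: \int_{-\tau_{i0}}^0 f_i(Z_{i\varphi}(\sigma))\,d\sigma\ge\delta\ \ \forall i=1,\dots,n\}$, with $\varphi=(\varphi_1,\dots,\varphi_n)$, $\tau_0=(\tau_{10},\dots,\tau_{n0})$. *)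

(* Defs.v *)
From Stdlib Require Import Reals Lra.
Open Scope R_scope.

Fixpoint sumR (n : nat) (g : nat -> R) : R :=
  match n with O => 0 | S k => sumR k g + g k end.

Definition cont_on_nonpos (g : R -> R) : Prop :=
  forall x, x <= 0 -> forall eps, 0 < eps -> exists d, 0 < d /\
    forall y, y <= 0 -> Rabs (y - x) < d -> Rabs (g y - g x) < eps.

Definition bounded_on_nonpos (g : R -> R) : Prop :=
  exists K, forall x, x <= 0 -> Rabs (g x) <= K.

Definition unif_cont_on_nonpos (g : R -> R) : Prop :=
  forall eps, 0 < eps -> exists d, 0 < d /\
    forall x y, x <= 0 -> y <= 0 -> Rabs (y - x) < d -> Rabs (g y - g x) < eps.

Definition lipschitz_on_nonpos (g : R -> R) : Prop :=
  exists L, forall x y, x <= 0 -> y <= 0 -> Rabs (g y - g x) <= L * Rabs (y - x).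

Definition in_X (alpha : R) (phi : R -> R) : Prop :=
  let psi := fun x => exp (- alpha * Rabs x) * phi x in
  cont_on_nonpos phi /\ bounded_on_nonpos psi /\ unif_cont_on_nonpos psi
  /\ lipschitz_on_nonpos psi.

Definition f_hyp (fi : R -> R) : Prop :=
  (exists L, forall x y, Rabs (fi x - fi y) <= L * Rabs (x - y)) /\
  (exists fi' : R -> R, (forall x, derivable_pt_lim fi x (fi' x)) /\
      continuity fi' /\ (forall x, fi' x <= 0)) /\
  (forall x, 0 < fi x) /\
  (forall eps, 0 < eps -> exists X, forall x, X <= x -> Rabs (fi x) < eps) /\
  (forall c, 1 <= c -> exists K, forall x, 0 <= x -> fi x / fi (c * x) <= K).

Definition assumptionA (n : nat) (muA muJ beta : nat -> R) (zeta : nat -> nat -> R)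
  (f : nat -> R -> R) : Prop :=
  forall i, (i < n)%nat ->
    0 < muA i /\ 0 < muJ i /\ 0 < beta i /\ 0 < zeta i i /\
    (forall j, (j < n)%nat -> 0 <= zeta i j) /\ f_hyp (f i).

Definition Zof (n : nat) (zeta : nat -> nat -> R) (u : nat -> R -> R) (i : nat) (s : R) : R :=
  sumR n (fun j => zeta i j * u j s).

Definition in_D (n : nat) (alpha : R) (zeta : nat -> nat -> R) (f : nat -> R -> R)
  (delta : R) (phi : nat -> R -> R) (tau0 : nat -> R) : Prop :=
  forall i, (i < n)%nat ->
    in_X alpha (phi i) /\ 0 <= tau0 i /\
    exists pr : Riemann_integrable (fun s => f i (Zof n zeta phi i s)) (- tau0 i) 0,
      delta <= RiemannInt pr.

(* derivative of g at t >= 0 relative to the domain [0,+oo) (one-sided at t = 0) *)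
Definition deriv_nonneg (g : R -> R) (t l : R) : Prop :=
  forall eps, 0 < eps -> exists d, 0 < d /\
    forall h, h <> 0 -> 0 <= t + h -> Rabs h < d ->
      Rabs ((g (t + h) - g t) / h - l) < eps.

Definition is_solution (n : nat) (muA muJ beta : nat -> R) (zeta : nat -> nat -> R)
  (f : nat -> R -> R) (phi : nat -> R -> R) (tau0 : nat -> R)
  (A : nat -> R -> R) (tau : nat -> R -> R) : Prop :=
  forall i, (i < n)%nat ->
    continuity (A i) /\
    (forall t, 0 <= A i t) /\
    (forall t, t <= 0 -> A i t = phi i t) /\
    tau i 0 = tau0 i /\
    (forall t, 0 <= t -> 0 <= tau i t) /\
    (forall t, 0 <= t ->
       deriv_nonneg (A i) t
         (- muA i * A i t
          + beta i * exp (- muJ i * tau i t)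
            * (f i (Zof n zeta A i t) / f i (Zof n zeta A i (t - tau i t)))
            * A i (t - tau i t))) /\
    (forall t, 0 <= t ->
       exists pr1 : Riemann_integrable (fun s => f i (Zof n zeta A i s)) (t - tau i t) t,
       exists pr2 : Riemann_integrable (fun s => f i (Zof n zeta phi i s)) (- tau0 i) 0,
         RiemannInt pr1 = RiemannInt pr2).

(* Main.v *)
Require Import Defs.
From Stdlib Require Import Reals Lra Psatz Classical.
From Coquelicot Require Import Coquelicot.
Open Scope R_scope.


Lemma cont_exR (F : R -> R) : (forall x, continuous F x) -> forall a b, ex_RInt F a b.
Proof. intros HF a b. apply (@ex_RInt_continuous R_CompleteNormedModule). intros; apply HF. Qed.

Lemma RInt_split0 (F : R -> R) : (forall x, continuous F x) ->
  forall a b, RInt F a b = RInt F 0 b - RInt F 0 a.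
Proof.
  intros HF a b.
  rewrite <- (RInt_Chasles F 0 a b) by (apply cont_exR; auto).
  change (plus (RInt F 0 a) (RInt F a b)) with (Rplus (RInt F 0 a) (RInt F a b)). lra.
Qed.

Lemma G_deriv (F : R -> R) : (forall x, continuous F x) ->
  forall x, is_derive (RInt F 0) x (F x).
Proof.
  intros HF x. apply is_derive_RInt with (a := 0).
  - apply filter_forall. intros y. apply RInt_correct. apply cont_exR; auto.
  - apply HF.
Qed.

Lemma RInt_pos (F : R -> R) : (forall x, continuous F x) -> (forall x, 0 < F x) ->
  forall a b, a < b -> 0 < RInt F a b.
Proof.
  intros HF Hp a b Hab. apply RInt_gt_0; auto.
Qed.

Lemma G_strict (F : R -> R) : (forall x, continuous F x) -> (forall x, 0 < F x) ->
  forall a b, a < b -> RInt F 0 a < RInt F 0 b.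
Proof.
  intros HF Hp a b Hab. pose proof (RInt_pos F HF Hp a b Hab).
  rewrite (RInt_split0 F HF) in H. lra.
Qed.

Lemma G_mono_inv (F : R -> R) : (forall x, continuous F x) -> (forall x, 0 < F x) ->
  forall a b, RInt F 0 a <= RInt F 0 b -> a <= b.
Proof.
  intros HF Hp a b H. destruct (Rle_lt_dec a b) as [h|h]; auto.
  pose proof (G_strict F HF Hp b a h). lra.
Qed.

Lemma G_cont (F : R -> R) : (forall x, continuous F x) -> forall x, continuous (RInt F 0) x.
Proof.
  intros HF x. apply (@ex_derive_continuous R_AbsRing R_NormedModule). eexists. apply G_deriv; auto.
Qed.

Lemma MVT_G (F : R -> R) : (forall x, continuous F x) ->
  forall a b, exists c, Rmin a b <= c <= Rmax a b /\ RInt F 0 b - RInt F 0 a = F c * (b - a).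
Proof.
  intros HF a b. destruct (MVT_gen (RInt F 0) a b F) as [c [Hc Hv]].
  - intros; apply G_deriv; auto.
  - intros. apply continuity_pt_filterlim. apply G_cont; auto.
  - exists c; split; auto.
Qed.


Lemma cont_of_ed (f : R -> R) (x : R) :
  (forall eps, 0 < eps -> exists d, 0 < d /\ forall y, Rabs (y - x) < d -> Rabs (f y - f x) < eps) ->
  continuous f x.
Proof.
  intros H. apply continuity_pt_filterlim. apply continuity_pt_locally.
  intros eps. destruct (H eps (cond_pos eps)) as [d [Hd Hy]].
  exists (mkposreal d Hd). intros y Hb. apply Hy. exact Hb.
Qed.

Lemma ed_of_cont (f : R -> R) (x : R) : continuous f x ->
  forall eps, 0 < eps -> exists d, 0 < d /\ forall y, Rabs (y - x) < d -> Rabs (f y - f x) < eps.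
Proof.
  intros H eps He. apply continuity_pt_filterlim in H. rewrite continuity_pt_locally in H.
  destruct (H (mkposreal eps He)) as [d Hd].
  exists d. split. apply cond_pos. intros y Hy. apply Hd. exact Hy.
Qed.

Definition sig_hyp (F tau : R -> R) (tau0 : R) : Prop :=
 (forall x, continuous F x) /\ (forall x, 0 < F x) /\ 0 <= tau0 /\
 (forall t, 0 <= t -> 0 <= tau t) /\
 (forall t, 0 <= t -> RInt F (t - tau t) t = RInt F (-tau0) 0).


Lemma sig_G F tau tau0 : sig_hyp F tau tau0 -> forall t, 0 <= t ->
  RInt F 0 (t - tau t) = RInt F 0 t - (RInt F 0 0 - RInt F 0 (-tau0)).
Proof.
  intros [HF [Hp [H0 [Ht Hi]]]] t t0. pose proof (Hi t t0).
  rewrite (RInt_split0 F HF (t - tau t) t), (RInt_split0 F HF (-tau0) 0) in H. lra.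
Qed.

Lemma sig_lower F tau tau0 : sig_hyp F tau tau0 -> forall t, 0 <= t -> - tau0 <= t - tau t.
Proof.
  intros H t t0. pose proof (sig_G F tau tau0 H t t0) as E.
  destruct H as [HF [Hp [H0 [Ht Hi]]]].
  apply (G_mono_inv F HF Hp). rewrite E.
  assert (RInt F 0 0 <= RInt F 0 t).
  { destruct t0 as [h|h]. left. apply G_strict; auto. subst. lra. }
  lra.
Qed.

Lemma sig_le F tau tau0 : sig_hyp F tau tau0 -> forall t, 0 <= t -> t - tau t <= t.
Proof. intros [HF [Hp [H0 [Ht Hi]]]] t t0. pose proof (Ht t t0). lra. Qed.

Lemma sig_mono F tau tau0 : sig_hyp F tau tau0 -> forall s t, 0 <= s -> s <= t ->
  s - tau s <= t - tau t.
Proof.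
  intros H s t s0 st. pose proof (sig_G F tau tau0 H s s0) as E1.
  pose proof (sig_G F tau tau0 H t (Rle_trans _ _ _ s0 st)) as E2.
  destruct H as [HF [Hp [H0 [Ht Hi]]]].
  apply (G_mono_inv F HF Hp). rewrite E1, E2.
  assert (RInt F 0 s <= RInt F 0 t).
  { destruct st as [h|h]. left. apply G_strict; auto. subst. lra. }
  lra.
Qed.

Lemma sig_cont_ed F tau tau0 : sig_hyp F tau tau0 -> forall t, 0 < t ->
  forall eps, 0 < eps -> exists d, 0 < d /\ forall y, Rabs (y - t) < d ->
    Rabs ((y - tau y) - (t - tau t)) < eps.
Proof.
  intros H t tp eps He.
  pose proof H as [HF [Hp [H0 [Ht Hi]]]].
  set (x := t - tau t).
  set (G := RInt F 0).
  assert (d1p : G x < G (x + eps)) by (apply G_strict; auto; lra).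
  assert (d2p : G (x - eps) < G x) by (apply G_strict; auto; lra).
  set (d := Rmin (G (x+eps) - G x) (G x - G (x - eps))).
  assert (dp : 0 < d) by (unfold d; apply Rmin_glb_lt; lra).
  destruct (ed_of_cont G t (G_cont F HF t) d dp) as [r [rp Hr]].
  exists (Rmin r t). split. apply Rmin_glb_lt; lra.
  intros y Hy.
  assert (Hyr : Rabs (y - t) < r) by (eapply Rlt_le_trans; [exact Hy| apply Rmin_l]).
  assert (Hyt : Rabs (y - t) < t) by (eapply Rlt_le_trans; [exact Hy| apply Rmin_r]).
  assert (y0 : 0 <= y) by (apply Rabs_def2 in Hyt; lra).
  pose proof (Hr y Hyr) as Gy.
  pose proof (sig_G F tau tau0 H y y0) as E1.
  pose proof (sig_G F tau tau0 H t (Rlt_le _ _ tp)) as E2.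
  fold G in E1, E2. fold x in E2.
  assert (Hd1 : d <= G (x+eps) - G x) by apply Rmin_l.
  assert (Hd2 : d <= G x - G (x-eps)) by apply Rmin_r.
  apply Rabs_def2 in Gy. destruct Gy as [Ga Gb].
  apply Rabs_def1.
  - destruct (Rlt_le_dec (y - tau y - x) eps) as [h|h]; auto.
    assert (G (x + eps) <= G (y - tau y)).
    { destruct h as [h|h]. left. apply G_strict; auto; lra. right. f_equal. lra. }
    lra.
  - destruct (Rlt_le_dec (-eps) (y - tau y - x)) as [h|h]; auto.
    assert (G (y - tau y) <= G (x - eps)).
    { destruct h as [h|h]. left. apply G_strict; auto; lra. right. f_equal. lra. }
    lra.
Qed.

Lemma sig_cont F tau tau0 : sig_hyp F tau tau0 -> forall t, 0 < t ->
  continuous (fun s => s - tau s) t.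
Proof.
  intros H t tp. apply cont_of_ed. apply (sig_cont_ed F tau tau0 H t tp).
Qed.


Lemma quot_est a b Ft m eps : 0 < m -> 0 <= Ft -> 0 < eps ->
  Rabs (a - Ft) < eps*m/4 -> Rabs (b - m) < m/2 ->
  Rabs (b - m) < eps*m*m/(4*(Ft+1)) -> Rabs (a/b - Ft/m) < eps.
Proof.
  intros mp Fp ep H1 H2 H3.
  apply Rabs_def2 in H1. apply Rabs_def2 in H2. apply Rabs_def2 in H3.
  assert (bp : 0 < b) by lra.
  set (e := eps*m*m/(4*(Ft+1))) in *.
  assert (He : Ft * e <= eps*m*m/4).
  { unfold e. apply Rmult_le_reg_r with (4*(Ft+1)). lra.
    field_simplify; try lra. nra. }
  assert (Hep : 0 <= e) by (unfold e; apply Rle_mult_inv_pos; [nra|lra]).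
  assert (E : a/b - Ft/m = ((a - Ft)*m + Ft*(m - b))/(b*m)) by (field; lra).
  rewrite E. apply Rabs_def1.
  - apply Rmult_lt_reg_r with (b*m). nra.
    unfold Rdiv. rewrite Rmult_assoc, Rinv_l by nra. rewrite Rmult_1_r.
    assert (Ft*(m-b) <= Ft * e) by (apply Rmult_le_compat_l; lra). nra.
  - apply Rmult_lt_reg_r with (b*m). nra.
    unfold Rdiv. rewrite Rmult_assoc, Rinv_l by nra. rewrite Rmult_1_r.
    assert (Ft*(b-m) <= Ft * e) by (apply Rmult_le_compat_l; lra). nra.
Qed.

Lemma MVT_G_abs (F : R -> R) : (forall x, continuous F x) ->
  forall a b, exists c, Rabs (c - a) <= Rabs (b - a) /\ RInt F 0 b - RInt F 0 a = F c * (b - a).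
Proof.
  intros HF a b. destruct (MVT_G F HF a b) as [c [Hc Hv]]. exists c. split; auto.
  unfold Rmin, Rmax in Hc. destruct (Rle_dec a b);
  unfold Rabs; repeat destruct Rcase_abs; lra.
Qed.

Lemma sig_deriv F tau tau0 : sig_hyp F tau tau0 -> forall t, 0 < t ->
  is_derive (fun s => s - tau s) t (F t / F (t - tau t)).
Proof.
  intros H t tp. apply is_derive_Reals. intros eps ep.
  pose proof H as [HF [Hp [H0 [Ht Hi]]]].
  set (x := t - tau t). set (m := F x). set (Ft := F t).
  assert (mp : 0 < m) by apply Hp. assert (Ftp : 0 < Ft) by apply Hp.
  assert (e1p : 0 < eps*m/4) by nra.
  destruct (ed_of_cont F t (HF t) (eps*m/4) e1p) as [r1 [r1p Hr1]].
  set (e2 := Rmin (m/2) (eps*m*m/(4*(Ft+1)))).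
  assert (e2p : 0 < e2). { unfold e2. apply Rmin_glb_lt. lra.
     apply Rmult_lt_0_compat. nra. apply Rinv_0_lt_compat. lra. }
  destruct (ed_of_cont F x (HF x) e2 e2p) as [r2 [r2p Hr2]].
  destruct (sig_cont_ed F tau tau0 H t tp r2 r2p) as [r3 [r3p Hr3]].
  assert (dp : 0 < Rmin r1 (Rmin r3 t)) by (repeat apply Rmin_glb_lt; lra).
  exists (mkposreal _ dp). simpl. intros h hn hd.
  assert (h1 : Rabs h < r1) by (eapply Rlt_le_trans; [exact hd| apply Rmin_l]).
  assert (h3 : Rabs h < r3) by (eapply Rlt_le_trans; [exact hd|];
     eapply Rle_trans; [apply Rmin_r| apply Rmin_l]).
  assert (ht : Rabs h < t) by (eapply Rlt_le_trans; [exact hd|];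
     eapply Rle_trans; [apply Rmin_r| apply Rmin_r]).
  assert (y0 : 0 <= t + h) by (apply Rabs_def2 in ht; lra).
  assert (Hs : Rabs ((t + h - tau (t + h)) - x) < r2).
  { apply Hr3. replace (t + h - t) with h by ring. auto. }
  destruct (MVT_G_abs F HF t (t+h)) as [eta [Heta Veta]].
  destruct (MVT_G_abs F HF x (t + h - tau (t+h))) as [xi [Hxi Vxi]].
  pose proof (sig_G F tau tau0 H (t+h) y0) as E1.
  pose proof (sig_G F tau tau0 H t (Rlt_le _ _ tp)) as E2. fold x in E2.
  assert (Eq : F xi * (t + h - tau (t + h) - x) = F eta * h).
  { rewrite <- Vxi. replace (t + h - t) with h in Veta by ring. rewrite <- Veta. lra. }
  assert (Fxp : 0 < F xi) by apply Hp.
  assert (Q : (t + h - tau (t + h) - x) / h = F eta / F xi).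
  { apply (Rmult_eq_reg_r (h * F xi)).
    - unfold Rdiv. replace ((t + h - tau (t + h) - x) * / h * (h * F xi)) with
        (F xi * (t + h - tau (t + h) - x) * (h * / h)) by ring.
      replace (F eta * / F xi * (h * F xi)) with (F eta * h * (F xi * / F xi)) by ring.
      rewrite Eq, !Rinv_r; lra.
    - intro Hz. apply Rmult_integral in Hz. lra. }
  rewrite Q.
  assert (A1 : Rabs (F eta - Ft) < eps*m/4).
  { apply Hr1. replace (t + h - t) with h in Heta by ring. lra. }
  assert (A2 : Rabs (F xi - m) < e2) by (apply Hr2; lra).
  apply quot_est; try lra.
  eapply Rlt_le_trans; [exact A2| apply Rmin_l].
  eapply Rlt_le_trans; [exact A2| apply Rmin_r].
Qed.


Lemma deriv_nonpos_decr (D d : R -> R) a b : a <= b ->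
  (forall x, a < x < b -> is_derive D x (d x)) -> (forall x, a < x < b -> d x <= 0) ->
  (forall x, a <= x <= b -> continuous D x) -> D b <= D a.
Proof.
  intros ab Hd Hs Hc.
  destruct (MVT_gen D a b (fun x => Rmin (d x) 0)) as [c [Hc1 Hc2]].
  - intros x Hx. idtac.
    unfold Rmin, Rmax in Hx. destruct (Rle_dec a b); [|lra].
    rewrite Rmin_left by (apply Hs; lra). apply Hd; lra.
  - intros x Hx. apply continuity_pt_filterlim. apply Hc.
    unfold Rmin, Rmax in Hx. destruct (Rle_dec a b); lra.
  - assert (Rmin (d c) 0 <= 0) by apply Rmin_r. nra.
Qed.


Record spH (mu muJ beta zeta delta tau0 : R) (f A F tau : R -> R) : Prop := {
 sh_mu : 0 < mu; sh_muJ : 0 < muJ; sh_beta : 0 < beta; sh_zeta : 0 < zeta;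
 sh_delta : 0 < delta;
 sh_fdec : forall x y, x <= y -> f y <= f x;
 sh_flim : forall eps, 0 < eps -> exists X, forall x, X <= x -> f x < eps;
 sh_Acont : forall x, continuous A x; sh_Apos : forall x, 0 <= A x;
 sh_sig : sig_hyp F tau tau0;
 sh_Fle : forall x, F x <= f (zeta * A x);
 sh_c : delta <= RInt F (-tau0) 0;
 sh_der : forall t, 0 < t -> is_derive A t
   (- mu * A t + beta * exp (- muJ * tau t) * (F t / F (t - tau t)) * A (t - tau t)) }.

Lemma is_derive_val (g : R -> R) x l l' : is_derive g x l -> l = l' -> is_derive g x l'.
Proof. intros H e; subst; auto. Qed.

Lemma exp_le x y : x <= y -> exp x <= exp y.
Proof. intros [h|h]. left; apply exp_increasing; auto. subst; lra. Qed.

Lemma dexp (c x : R) : is_derive (fun s => exp (c * s)) x (c * exp (c * x)).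
Proof. auto_derive; auto. ring. Qed.

Lemma cexp (c x : R) : continuous (fun s => exp (c * s)) x.
Proof. apply (@ex_derive_continuous R_AbsRing R_NormedModule). eexists; apply dexp. Qed.

Lemma recruit_nonneg mu muJ beta zeta delta tau0 f A F tau :
  spH mu muJ beta zeta delta tau0 f A F tau -> forall t,
  0 <= beta * exp (- muJ * tau t) * (F t / F (t - tau t)) * A (t - tau t).
Proof.
  intros H t. destruct H. destruct sh_sig0 as [HF [Hp _]].
  assert (0 < F t) by apply Hp. assert (0 < F (t - tau t)) by apply Hp.
  assert (0 < exp (- muJ * tau t)) by apply exp_pos.
  assert (0 <= A (t - tau t)) by apply sh_Apos0.
  apply Rmult_le_pos; [|auto]. apply Rmult_le_pos; [nra|].
  apply Rlt_le, Rdiv_lt_0_compat; auto.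
Qed.

Lemma growth mu muJ beta zeta delta tau0 f A F tau :
  spH mu muJ beta zeta delta tau0 f A F tau -> forall a b, 0 <= a -> a <= b ->
  exp (mu * a) * A a <= exp (mu * b) * A b.
Proof.
  intros H a b a0 ab.
  set (Rc s := beta * exp (- muJ * tau s) * (F s / F (s - tau s)) * A (s - tau s)).
  assert (Hd : forall x, a < x < b -> is_derive (fun s => - (exp (mu * s) * A s)) x
     (- (exp (mu * x) * Rc x))).
  { intros x Hx. apply is_derive_val with
      (opp (plus (mult (mu * exp (mu * x)) (A x)) (mult (exp (mu * x))
        (- mu * A x + Rc x)))).
    - apply (is_derive_opp (fun s => exp (mu * s) * A s)).
      apply (is_derive_mult (fun s => exp (mu * s)) A).
      + apply dexp.
      + apply (sh_der _ _ _ _ _ _ _ _ _ _ H). lra.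
      + intros; apply Rmult_comm.
    - unfold opp, plus, mult; simpl. ring. }
  pose proof (deriv_nonpos_decr (fun s => - (exp (mu * s) * A s)) _ a b ab Hd) as K.
  assert (- (exp (mu * b) * A b) <= - (exp (mu * a) * A a)); [|lra].
  apply K.
  - intros x Hx. pose proof (recruit_nonneg _ _ _ _ _ _ _ _ _ _ H x).
    pose proof (exp_pos (mu * x)). unfold Rc. cbv beta. assert (0 <= exp (mu*x) * (beta * exp (- muJ * tau x) * (F x / F (x - tau x)) * A (x - tau x))) by (apply Rmult_le_pos; lra). lra.
  - intros x Hx. apply (continuous_opp (fun s => exp (mu * s) * A s)).
    apply (continuous_mult (fun s => exp (mu * s)) A).
    + apply cexp.
    + apply (sh_Acont _ _ _ _ _ _ _ _ _ _ H).
Qed.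

Lemma fast_cohort mu muJ beta zeta delta tau0 f A F tau :
  spH mu muJ beta zeta delta tau0 f A F tau -> forall T X, 0 < T ->
  (forall x, X <= x -> f x < delta / T) ->
  forall t, 0 <= t -> 0 <= t - tau t -> tau t < T ->
  A (t - tau t) <= exp (mu * T) * Rmax X 0 / zeta.
Proof.
  intros H T X Tp HX t t0 s0 tT.
  pose proof H as [Hmu HmuJ Hbeta Hzeta Hdelta Hfdec Hflim HAc HAp Hsig HFle Hc Hder].
  pose proof Hsig as [HF [Hp [Ht0 [Htp Hi]]]].
  assert (dT : 0 < delta / T) by (apply Rdiv_lt_0_compat; lra).
  destruct (classic (exists r, t - tau t <= r <= t /\ delta / T < F r)) as [[r [Hr Fr]]|Hn].
  - assert (Hz : zeta * A r < X).
    { destruct (Rlt_le_dec (zeta * A r) X) as [h|h]; auto.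
      pose proof (HX _ h). pose proof (HFle r). lra. }
    assert (Ar : A r <= Rmax X 0 / zeta).
    { apply Rmult_le_reg_l with zeta; auto. field_simplify; try lra.
      pose proof (Rmax_l X 0). lra. }
    pose proof (growth _ _ _ _ _ _ _ _ _ _ H (t - tau t) r s0 (proj1 Hr)) as G.
    assert (E : A (t - tau t) <= exp (mu * (r - (t - tau t))) * A r).
    { apply Rmult_le_reg_l with (exp (mu * (t - tau t))). apply exp_pos.
      rewrite <- Rmult_assoc, <- exp_plus.
      replace (mu * (t - tau t) + mu * (r - (t - tau t))) with (mu * r) by ring. auto. }
    assert (E2 : exp (mu * (r - (t - tau t))) <= exp (mu * T)).
    { apply exp_le. apply Rmult_le_compat_l; lra. }
    pose proof (HAp r). pose proof (exp_pos (mu * T)).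
    apply Rle_trans with (exp (mu * (r - (t - tau t))) * A r); auto.
    unfold Rdiv. rewrite Rmult_assoc. apply Rmult_le_compat; try lra.
    apply Rlt_le, exp_pos.
  - exfalso.
    assert (Hb : forall r, t - tau t <= r <= t -> Rabs (F r) <= delta / T).
    { intros r Hr. rewrite Rabs_pos_eq by (apply Rlt_le, Hp).
      destruct (Rle_lt_dec (F r) (delta / T)) as [h|h]; auto.
      exfalso. apply Hn. exists r. split; auto. }
    pose proof (Htp t t0) as tp.
    pose proof (abs_RInt_le_const F (t - tau t) t (delta / T) ltac:(lra)
      (cont_exR F HF _ _) Hb) as K.
    rewrite (Hi t t0) in K. pose proof (Rle_abs (RInt F (- tau0) 0)).
    replace (t - (t - tau t)) with (tau t) in K by ring.
    assert (Hlt : tau t * (delta / T) < T * (delta / T)) by (apply Rmult_lt_compat_r; lra).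
    replace (T * (delta / T)) with delta in Hlt by (field; lra). lra.
Qed.


Definition wcut (u : R) := Rmax 0 (Rmin 1 (1 - u)).
Definition hfun (B e0 : R) (A : R -> R) (u : R) := B + e0 * A u + wcut u * A u.

Lemma wcut_pos u : 0 <= wcut u.
Proof. apply Rmax_l. Qed.
Lemma wcut_le1 u : wcut u <= 1.
Proof. unfold wcut. apply Rmax_lub. lra. apply Rmin_l. Qed.
Lemma wcut_neg u : u <= 0 -> wcut u = 1.
Proof. intros. unfold wcut. rewrite Rmin_left by lra. apply Rmax_right. lra. Qed.
Lemma wcut_ge1 u : 1 <= u -> wcut u = 0.
Proof. intros. unfold wcut. rewrite Rmin_right by lra. apply Rmax_left. lra. Qed.
Lemma wcut_cont u : continuous wcut u.
Proof.
  apply continuity_pt_filterlim. unfold wcut.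
  apply continuity_pt_locally. intros eps. exists eps. intros y Hy.
  change (Rabs (y - u) < eps) in Hy.
  unfold Rmax, Rmin; repeat destruct Rle_dec; unfold Rabs in *;
  repeat destruct Rcase_abs; lra.
Qed.

Lemma recruit_bound mu muJ beta zeta delta tau0 f A F tau :
  spH mu muJ beta zeta delta tau0 f A F tau -> forall gam T X B,
  0 < gam -> gam <= muJ / 2 -> 0 < T ->
  (forall x, X <= x -> f x < delta / T) ->
  0 < B -> exp (mu * T) * Rmax X 0 / zeta <= B ->
  forall s, 0 < s ->
  exp (- muJ * tau s) * A (s - tau s) <=
  exp (- gam * tau s) * hfun B (exp (- muJ * T / 2)) A (s - tau s).
Proof.
  intros H gam T X B gp gle Tp HX Bp HB s sp.
  pose proof H as [Hmu HmuJ Hbeta Hzeta Hdelta Hfdec Hflim HAc HAp Hsig HFle Hc Hder].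
  pose proof Hsig as [HF [Hp [Ht0 [Htp Hi]]]].
  pose proof (Htp s (Rlt_le _ _ sp)) as taup.
  set (sg := s - tau s).
  pose proof (HAp sg) as Ap.
  pose proof (exp_pos (- muJ * T / 2)) as e0p.
  pose proof (exp_pos (- gam * tau s)) as egp.
  assert (hge : exp (- muJ * T / 2) * A sg <= hfun B (exp (- muJ * T / 2)) A sg).
  { unfold hfun. pose proof (wcut_pos sg). nra. }
  destruct (Rlt_le_dec sg 0) as [sn|s0].
  - unfold hfun. rewrite wcut_neg by lra.
    assert (exp (- muJ * tau s) <= exp (- gam * tau s)) by (apply exp_le; nra).
    assert (0 <= exp (- muJ * T / 2) * A sg) by nra.
    pose proof (exp_pos (- muJ * tau s)). nra.
  - destruct (Rlt_le_dec (tau s) T) as [fast|slow].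
    + pose proof (fast_cohort _ _ _ _ _ _ _ _ _ _ H T X Tp HX s (Rlt_le _ _ sp) s0 fast) as K.
      fold sg in K.
      assert (exp (- muJ * tau s) <= exp (- gam * tau s)) by (apply exp_le; nra).
      assert (A sg <= hfun B (exp (- muJ * T / 2)) A sg).
      { unfold hfun. pose proof (wcut_pos sg). nra. }
      pose proof (exp_pos (- muJ * tau s)). nra.
    + assert (E : exp (- muJ * tau s) <= exp (- gam * tau s) * exp (- muJ * T / 2)).
      { rewrite <- exp_plus. apply exp_le. nra. }
      pose proof (exp_pos (- muJ * tau s)).
      apply Rle_trans with (exp (- gam * tau s) * exp (- muJ * T / 2) * A sg).
      * apply Rmult_le_compat_r; auto.
      * rewrite Rmult_assoc. apply Rmult_le_compat_l; lra.
Qed.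


Lemma hfun_cont B e0 (A : R -> R) : (forall x, continuous A x) ->
  forall x, continuous (hfun B e0 A) x.
Proof.
  intros HA x. unfold hfun.
  apply (continuous_plus (fun u => B + e0 * A u) (fun u => wcut u * A u)).
  - apply (continuous_plus (fun _ => B) (fun u => e0 * A u)).
    + apply continuous_const.
    + apply (continuous_mult (fun _ => e0) A). apply continuous_const. apply HA.
  - apply (continuous_mult wcut A). apply wcut_cont. apply HA.
Qed.

Lemma kfun_cont gam B e0 (A : R -> R) : (forall x, continuous A x) ->
  forall x, continuous (fun u => exp (gam * u) * hfun B e0 A u) x.
Proof.
  intros HA x. apply (continuous_mult (fun u => exp (gam * u)) (hfun B e0 A)).
  apply cexp. apply hfun_cont; auto.
Qed.

Lemma Phi_deriv (k : R -> R) (sg : R -> R) beta gam a s dsg :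
  (forall x, continuous k x) -> is_derive sg s dsg ->
  is_derive (fun t => beta * exp (- gam * t) * RInt k a (sg t)) s
   (- gam * (beta * exp (- gam * s) * RInt k a (sg s)) + beta * exp (- gam * s) * (dsg * k (sg s))).
Proof.
  intros Hk Hs.
  apply is_derive_val with (plus (mult (beta * (- gam * exp (- gam * s))) (RInt k a (sg s)))
     (mult (beta * exp (- gam * s)) (scal dsg (k (sg s))))).
  - apply (is_derive_mult (fun t => beta * exp (- gam * t)) (fun t => RInt k a (sg t))).
    + apply (is_derive_scal (fun t => exp (- gam * t))). apply dexp.
    + apply (is_derive_comp (RInt k a) sg). 2: auto.
      apply is_derive_RInt with (a := a).
      * apply filter_forall. intros y. apply RInt_correct. apply cont_exR; auto.
      * apply Hk.
    + intros; apply Rmult_comm.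
  - unfold plus, mult, scal; simpl. unfold mult; simpl. ring.
Qed.

Lemma comparison mu muJ beta zeta delta tau0 f A F tau :
  spH mu muJ beta zeta delta tau0 f A F tau -> forall gam T X B,
  0 < gam -> gam <= muJ / 2 -> gam <= mu -> 0 < T ->
  (forall x, X <= x -> f x < delta / T) ->
  0 < B -> exp (mu * T) * Rmax X 0 / zeta <= B ->
  forall t, 1 <= t ->
  A t <= beta * exp (- gam * t) *
     RInt (fun u => exp (gam * u) * hfun B (exp (- muJ * T / 2)) A u) (1 - tau 1) (t - tau t)
     + exp (- mu * (t - 1)) * A 1.
Proof.
  intros H gam T X B gp gle gmu Tp HX Bp HB t t1.
  pose proof H as [Hmu HmuJ Hbeta Hzeta Hdelta Hfdec Hflim HAc HAp Hsig HFle Hc Hder].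
  pose proof Hsig as [HF [Hp [Ht0 [Htp Hi]]]].
  set (e0 := exp (- muJ * T / 2)).
  set (k := fun u => exp (gam * u) * hfun B e0 A u).
  set (a := 1 - tau 1).
  set (Phi := fun s => beta * exp (- gam * s) * RInt k a (s - tau s)).
  assert (Hk : forall x, continuous k x) by (apply kfun_cont; auto).
  assert (kp : forall u, 0 <= k u).
  { intros u. unfold k, hfun. pose proof (exp_pos (gam * u)). pose proof (HAp u).
    pose proof (wcut_pos u). assert (0 < e0) by apply exp_pos.
    apply Rmult_le_pos; nra. }
  set (Rc := fun s => beta * exp (- muJ * tau s) * (F s / F (s - tau s)) * A (s - tau s)).
  set (dPhi := fun s => - gam * Phi s + beta * exp (- gam * s) * ((F s / F (s - tau s)) * k (s - tau s))).
  assert (HdPhi : forall s, 0 < s -> is_derive Phi s (dPhi s)).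
  { intros s sp. apply (Phi_deriv k (fun s => s - tau s)); auto. apply (sig_deriv F tau tau0 Hsig s sp). }
  set (D := fun s => exp (mu * s) * (A s - Phi s)).
  assert (HdD : forall s, 0 < s -> is_derive D s
     (mu * exp (mu * s) * (A s - Phi s) + exp (mu * s) * ((- mu * A s + Rc s) - dPhi s))).
  { intros s sp. apply is_derive_val with (plus (mult (mu * exp (mu * s)) (A s - Phi s))
       (mult (exp (mu * s)) (minus (- mu * A s + Rc s) (dPhi s)))).
    - apply (is_derive_mult (fun s => exp (mu * s)) (fun s => A s - Phi s)).
      + apply dexp.
      + apply (is_derive_minus A Phi). apply Hder; auto. apply HdPhi; auto.
      + intros; apply Rmult_comm.
    - unfold plus, mult, minus, opp, plus; simpl. ring. }
  assert (Phi_nn : forall s, 1 <= s -> 0 <= Phi s).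
  { intros s s1. unfold Phi. apply Rmult_le_pos.
    pose proof (exp_pos (- gam * s)). nra.
    apply RInt_ge_0. apply (sig_mono F tau tau0 Hsig 1 s); lra.
    apply cont_exR; auto. intros; apply kp. }
  assert (Dt : D t <= D 1).
  { apply (deriv_nonpos_decr D (fun s => mu * exp (mu * s) * (A s - Phi s) + exp (mu * s) * (- mu * A s + Rc s - dPhi s)) 1 t t1).
    - intros x Hx. apply HdD. lra.
    - intros x Hx.
      pose proof (recruit_bound _ _ _ _ _ _ _ _ _ _ H gam T X B gp gle Tp HX Bp HB x ltac:(lra)) as RB.
      fold e0 in RB.
      set (q := F x / F (x - tau x)).
      assert (qp : 0 < q) by (apply Rdiv_lt_0_compat; apply Hp).
      assert (E : exp (- gam * x) * k (x - tau x) = exp (- gam * tau x) * hfun B e0 A (x - tau x)).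
      { unfold k. rewrite <- Rmult_assoc, <- exp_plus. f_equal. f_equal. ring. }
      assert (Hineq : Rc x - beta * exp (- gam * x) * (q * k (x - tau x)) <= 0).
      { replace (beta * exp (- gam * x) * (q * k (x - tau x))) with
          (beta * q * (exp (- gam * x) * k (x - tau x))) by ring.
        rewrite E. unfold Rc. fold q.
        replace (beta * exp (- muJ * tau x) * q * A (x - tau x)) with
          (beta * q * (exp (- muJ * tau x) * A (x - tau x))) by ring.
        assert (0 < beta * q) by nra. nra. }
      pose proof (Phi_nn x ltac:(lra)). pose proof (exp_pos (mu * x)).
      unfold dPhi. fold q.
      assert (Ex : mu * exp (mu * x) * (A x - Phi x) + exp (mu * x) * (- mu * A x + Rc x -
        (- gam * Phi x + beta * exp (- gam * x) * (q * k (x - tau x)))) =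
        exp (mu * x) * ((gam - mu) * Phi x + (Rc x - beta * exp (- gam * x) * (q * k (x - tau x))))) by ring.
      rewrite Ex. assert ((gam - mu) * Phi x <= 0) by nra. nra.
    - intros x Hx. apply (@ex_derive_continuous R_AbsRing R_NormedModule).
      eexists. apply HdD. lra. }
  unfold D, Phi in Dt.
  replace (RInt k a (1 - tau 1)) with 0 in Dt by (unfold a; rewrite RInt_point; reflexivity).
  assert (E1 : exp (mu * t) * exp (- mu * (t - 1)) = exp (mu * 1)).
  { rewrite <- exp_plus. f_equal. ring. }
  pose proof (exp_pos (mu * t)).
  apply Rmult_le_reg_l with (exp (mu * t)); auto.
  rewrite Rmult_plus_distr_l.
  assert (E2 : exp (mu * t) * (exp (- mu * (t - 1)) * A 1) = exp (mu * 1) * A 1)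
    by (rewrite <- Rmult_assoc, E1; ring).
  rewrite E2. fold a. nra.
Qed.


Lemma Phi_bound mu muJ beta zeta delta tau0 f A F tau :
  spH mu muJ beta zeta delta tau0 f A F tau -> forall gam e0 B X Y L0 t,
  0 < gam -> 0 <= e0 -> 0 < B -> 0 <= X -> 0 <= Y -> 0 <= L0 -> 1 <= t ->
  (forall u, 1 - tau 1 <= u <= t - tau t -> A u <= X + Y * exp (- 2 * gam * u)) ->
  (forall u, 1 - tau 1 <= u <= 1 -> A u <= L0) ->
  beta * exp (- gam * t) * RInt (fun u => exp (gam * u) * hfun B e0 A u) (1 - tau 1) (t - tau t)
  <= beta * (B + e0 * X) / gam
     + beta * (e0 * Y + L0 * exp (2 * gam)) * exp (- gam * (1 - tau 1)) * exp (- gam * t) / gam.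
Proof.
  intros H gam e0 B X Y L0 t gp e0p Bp Xp Yp L0p t1 HXY HL0.
  pose proof H as [Hmu HmuJ Hbeta Hzeta Hdelta Hfdec Hflim HAc HAp Hsig HFle Hc Hder].
  set (a := 1 - tau 1). set (s := t - tau t).
  assert (As : a <= s) by (apply (sig_mono F tau tau0 Hsig 1 t); lra).
  assert (st : s <= t) by (apply (sig_le F tau tau0 Hsig t); lra).
  set (C1 := B + e0 * X). set (E := e0 * Y + L0 * exp (2 * gam)).
  assert (C1p : 0 < C1) by (unfold C1; nra).
  assert (Ep : 0 <= E) by (unfold E; pose proof (exp_pos (2*gam)); nra).
  set (g := fun u => C1 * exp (gam * u) + E * exp (- gam * u)).
  set (Pg := fun u => C1 * exp (gam * u) / gam - E * exp (- gam * u) / gam).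
  assert (Hg : is_RInt g a s (minus (Pg s) (Pg a))).
  { apply (is_RInt_derive Pg g).
    - intros x _. unfold Pg, g. auto_derive; auto. field. lra.
    - intros x _. unfold g.
      apply (continuous_plus (fun u => C1 * exp (gam * u)) (fun u => E * exp (- gam * u))).
      + apply (continuous_scal_r C1 (fun u => exp (gam * u))). apply cexp.
      + apply (continuous_scal_r E (fun u => exp (- gam * u))). apply cexp. }
  assert (Hk : forall x, continuous (fun u => exp (gam * u) * hfun B e0 A u) x)
    by (apply kfun_cont; auto).
  assert (Hle : RInt (fun u => exp (gam * u) * hfun B e0 A u) a s <= RInt g a s).
  { apply RInt_le; auto. apply cont_exR; auto. eexists; exact Hg.
    intros u Hu. unfold g, hfun.
    pose proof (HXY u ltac:(fold a s; lra)) as K1.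
    assert (K2 : wcut u * A u <= L0 * exp (2 * gam) * exp (- 2 * gam * u)).
    { destruct (Rle_lt_dec u 1) as [u1|u1].
      - pose proof (HL0 u ltac:(fold a; lra)). pose proof (wcut_le1 u). pose proof (wcut_pos u).
        pose proof (HAp u).
        assert (1 <= exp (2 * gam) * exp (- 2 * gam * u)).
        { rewrite <- exp_plus. rewrite <- exp_0. apply exp_le. nra. }
        nra.
      - rewrite wcut_ge1 by lra. pose proof (exp_pos (2*gam)).
        pose proof (exp_pos (- 2 * gam * u)). rewrite Rmult_0_l. apply Rmult_le_pos; nra. }
    assert (K3 : B + e0 * A u + wcut u * A u <= C1 + E * exp (- 2 * gam * u)).
    { unfold C1, E. pose proof (exp_pos (- 2 * gam * u)). nra. }
    pose proof (exp_pos (gam * u)) as ep.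
    apply Rle_trans with (exp (gam * u) * (C1 + E * exp (- 2 * gam * u))).
    apply Rmult_le_compat_l; lra.
    assert (exp (gam * u) * exp (- 2 * gam * u) = exp (- gam * u))
      by (rewrite <- exp_plus; f_equal; ring).
    nra. }
  rewrite (is_RInt_unique g a s _ Hg) in Hle.
  unfold minus, plus, opp in Hle; simpl in Hle. unfold Pg in Hle.
  assert (Hle2 : RInt (fun u => exp (gam * u) * hfun B e0 A u) a s <=
     C1 * exp (gam * s) / gam + E * exp (- gam * a) / gam).
  { pose proof (exp_pos (gam * a)). pose proof (exp_pos (- gam * s)).
    assert (0 <= C1 * exp (gam * a) / gam) by (apply Rle_mult_inv_pos; nra).
    assert (0 <= E * exp (- gam * s) / gam) by (apply Rle_mult_inv_pos; nra).
    lra. }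
  assert (Ee : exp (- gam * t) * exp (gam * s) <= 1).
  { rewrite <- exp_plus, <- exp_0. apply exp_le. nra. }
  pose proof (exp_pos (- gam * t)) as et.
  apply Rle_trans with (beta * exp (- gam * t) * (C1 * exp (gam * s) / gam + E * exp (- gam * a) / gam)).
  { apply Rmult_le_compat_l; auto. nra. }
  unfold Rdiv. fold C1 E.
  replace (beta * exp (- gam * t) * (C1 * exp (gam * s) * / gam + E * exp (- gam * a) * / gam))
    with (beta * C1 * / gam * (exp (- gam * t) * exp (gam * s)) + beta * E * exp (- gam * a) * exp (- gam * t) * / gam) by ring.
  assert (0 < beta * C1 * / gam) by (apply Rmult_lt_0_compat; [nra| apply Rinv_0_lt_compat; lra]).
  nra.
Qed.


Lemma exp_small C c eta : 0 <= C -> 0 < c -> 0 < eta ->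
  exists T, forall t, T <= t -> C * exp (- c * t) <= eta.
Proof.
  intros Cp cp ep. exists (ln (C / eta + 1) / c). intros t Ht.
  assert (Cq : 0 <= C / eta) by (apply Rle_mult_inv_pos; lra).
  assert (E1 : C / eta + 1 <= exp (c * t)).
  { rewrite <- (exp_ln (C / eta + 1)) by lra. apply exp_le.
    apply Rmult_le_reg_r with (/ c). apply Rinv_0_lt_compat; lra.
    replace (c * t * / c) with t by (field; lra). exact Ht. }
  assert (E2 : exp (- c * t) * exp (c * t) = 1) by (rewrite <- exp_plus, <- exp_0; f_equal; ring).
  pose proof (exp_pos (- c * t)). pose proof (exp_pos (c * t)).
  assert (C <= eta * exp (c * t)).
  { apply Rle_trans with (eta * (C / eta + 1)). field_simplify; lra.
    apply Rmult_le_compat_l; lra. }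
  apply Rmult_le_reg_r with (exp (c * t)); auto.
  rewrite Rmult_assoc, E2. lra.
Qed.

Lemma species_bound mu muJ beta zeta delta (f : R -> R) :
  0 < mu -> 0 < muJ -> 0 < beta -> 0 < zeta -> 0 < delta ->
  (forall eps, 0 < eps -> exists X, forall x, X <= x -> f x < eps) ->
  exists M, 0 < M /\ forall tau0 A F tau, spH mu muJ beta zeta delta tau0 f A F tau ->
    forall eps, 0 < eps -> exists T, forall t, T <= t -> A t <= M + eps.
Proof.
  intros Hmu HmuJ Hbeta Hzeta Hdelta Hflim.
  set (gam := Rmin mu (muJ / 2)).
  assert (gp : 0 < gam) by (apply Rmin_glb_lt; lra).
  assert (gmu : gam <= mu) by apply Rmin_l.
  assert (gJ : gam <= muJ / 2) by apply Rmin_r.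
  set (T := Rmax 1 (2 / muJ * ln (2 * beta / gam))).
  assert (T1 : 1 <= T) by apply Rmax_l.
  set (e0 := exp (- muJ * T / 2)).
  assert (e0p : 0 < e0) by apply exp_pos.
  assert (He0 : beta * e0 / gam <= 1 / 2).
  { assert (L : ln (2 * beta / gam) <= muJ * T / 2).
    { assert (2 / muJ * ln (2 * beta / gam) <= T) by apply Rmax_r.
      apply Rmult_le_reg_l with (2 / muJ). apply Rdiv_lt_0_compat; lra.
      replace (2 / muJ * (muJ * T / 2)) with T by (field; lra). auto. }
    assert (e0 <= gam / (2 * beta)).
    { unfold e0. rewrite <- (exp_ln (gam / (2 * beta))) by (apply Rdiv_lt_0_compat; lra).
      apply exp_le. rewrite ln_div by lra. rewrite (ln_div (2*beta) gam) in L by lra. lra. }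
    apply Rmult_le_reg_r with gam; auto. field_simplify; try lra.
    apply Rmult_le_reg_r with (/ beta). apply Rinv_0_lt_compat; lra.
    assert (e0 * (2 * beta) <= gam).
    { apply Rmult_le_reg_r with (/ (2 * beta)). apply Rinv_0_lt_compat; lra.
      replace (e0 * (2 * beta) * / (2 * beta)) with e0 by (field; lra). exact H. }
    field_simplify; lra. }
  assert (Tp : 0 < T) by lra.
  destruct (Hflim (delta / T)) as [X HX]. apply Rdiv_lt_0_compat; lra.
  set (B := exp (mu * T) * Rmax X 0 / zeta + 1).
  assert (HB : exp (mu * T) * Rmax X 0 / zeta <= B) by (unfold B; lra).
  assert (Bp : 0 < B).
  { unfold B. assert (0 <= exp (mu * T) * Rmax X 0 / zeta); [|lra].
    apply Rle_mult_inv_pos; [|lra]. apply Rmult_le_pos. apply Rlt_le, exp_pos. apply Rmax_r. }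
  set (b := beta * B / gam).
  assert (bp : 0 < b) by (unfold b; apply Rdiv_lt_0_compat; nra).
  exists (2 * b). split. lra.
  intros tau0 A F tau H eps epsp.
  pose proof H as [_ _ _ _ _ Hfdec _ HAc HAp Hsig HFle Hc Hder].
  set (a := 1 - tau 1).
  assert (a1 : a <= 1) by (apply (sig_le F tau tau0 Hsig 1); lra).
  destruct (continuity_ab_maj A a 1 a1) as [mx [Hmx Hmxr]].
  { intros; apply continuity_pt_filterlim; apply HAc. }
  set (L0 := A mx).
  assert (L0p : 0 <= L0) by apply HAp.
  assert (HL0 : forall u, a <= u <= 1 -> A u <= L0) by (intros; apply Hmx; auto).
  assert (KEY : forall t X' Y, 1 <= t -> 0 <= X' -> 0 <= Y ->
     (forall u, a <= u <= t - tau t -> A u <= X' + Y * exp (- 2 * gam * u)) ->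
     A t <= b + X' / 2 + beta * (e0 * Y + L0 * exp (2 * gam)) * exp (- gam * a) * exp (- gam * t) / gam
            + exp (- mu * (t - 1)) * A 1).
  { intros t X' Y t1 X'p Yp HXY.
    pose proof (comparison _ _ _ _ _ _ _ _ _ _ H gam T X B gp gJ gmu Tp HX Bp HB t t1) as C1.
    pose proof (Phi_bound _ _ _ _ _ _ _ _ _ _ H gam e0 B X' Y L0 t gp (Rlt_le _ _ e0p) Bp X'p Yp L0p t1 HXY HL0) as C2.
    fold e0 a in C1. fold a in C2.
    assert (beta * (B + e0 * X') / gam <= b + X' / 2).
    { unfold b. replace (beta * (B + e0 * X') / gam) with (beta * B / gam + (beta * e0 / gam) * X') by (field; lra).
      nra. }
    lra. }
  set (C0 := beta * (e0 * 0 + L0 * exp (2 * gam)) * exp (- gam * a) / gam).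
  assert (C0p : 0 <= C0).
  { unfold C0. apply Rle_mult_inv_pos; [|lra]. pose proof (exp_pos (2*gam)). pose proof (exp_pos (- gam * a)).
    apply Rmult_le_pos; [apply Rmult_le_pos|]; nra. }
  set (K := L0 + 2 * (b + C0 + L0)).
  assert (Kp : 0 <= K) by (unfold K; lra).
  assert (HK : forall u, a <= u -> A u <= K).
  { intros u au. destruct (Rle_lt_dec u 1) as [u1|u1].
    - pose proof (HL0 u (conj au u1)). unfold K. lra.
    - destruct (continuity_ab_maj A a u au) as [m [Hm Hmr]].
      { intros; apply continuity_pt_filterlim; apply HAc. }
      apply Rle_trans with (A m). apply Hm; lra.
      destruct (Rle_lt_dec m 1) as [m1|m1].
      + pose proof (HL0 m (conj (proj1 Hmr) m1)). unfold K. lra.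
      + assert (sm : m - tau m <= m) by (apply (sig_le F tau tau0 Hsig m); lra).
        pose proof (KEY m (A m) 0 (Rlt_le _ _ m1) (HAp m) (Rle_refl 0)) as Km.
        assert (Hp : forall v, a <= v <= m - tau m -> A v <= A m + 0 * exp (- 2 * gam * v)).
        { intros v Hv. rewrite Rmult_0_l, Rplus_0_r. apply Hm. lra. }
        specialize (Km Hp).
        assert (E1 : exp (- gam * m) <= 1) by (rewrite <- exp_0; apply exp_le; nra).
        assert (E2 : exp (- mu * (m - 1)) <= 1) by (apply Rle_trans with (exp 0); [apply exp_le; nra| rewrite exp_0; lra]).
        assert (A1 : A 1 <= L0) by (apply HL0; lra).
        pose proof (HAp 1).
        assert (beta * (e0 * 0 + L0 * exp (2 * gam)) * exp (- gam * a) * exp (- gam * m) / gam <= C0).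
        { unfold C0. replace (beta * (e0 * 0 + L0 * exp (2 * gam)) * exp (- gam * a) * exp (- gam * m) / gam)
            with (beta * (e0 * 0 + L0 * exp (2 * gam)) * exp (- gam * a) / gam * exp (- gam * m)) by (field; lra).
          fold C0. pose proof (exp_pos (- gam * m)). nra. }
        assert (exp (- mu * (m - 1)) * A 1 <= L0) by nra.
        unfold K. lra. }
  assert (STEP : forall X' s, 0 <= X' -> (forall u, s <= u -> A u <= X') ->
     forall eta, 0 < eta -> exists T', forall t, T' <= t -> A t <= b + X' / 2 + eta).
  { intros X' s X'p Hs eta etap.
    set (Y := K * exp (2 * gam * s)).
    assert (Yp : 0 <= Y) by (unfold Y; pose proof (exp_pos (2*gam*s)); nra).
    set (C := beta * (e0 * Y + L0 * exp (2 * gam)) * exp (- gam * a) / gam).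
    assert (Cp : 0 <= C).
    { unfold C. apply Rle_mult_inv_pos; [|lra]. pose proof (exp_pos (2*gam)). pose proof (exp_pos (- gam * a)).
      apply Rmult_le_pos; [apply Rmult_le_pos|]; nra. }
    destruct (exp_small C gam (eta / 2) Cp gp ltac:(lra)) as [T1' HT1].
    destruct (exp_small (exp mu * A 1) mu (eta / 2) ltac:(pose proof (exp_pos mu); pose proof (HAp 1); nra) Hmu ltac:(lra)) as [T2' HT2].
    exists (Rmax 1 (Rmax T1' T2')). intros t Ht.
    assert (t1 : 1 <= t) by (eapply Rle_trans; [apply Rmax_l|exact Ht]).
    assert (tT1 : T1' <= t) by (eapply Rle_trans; [|exact Ht]; eapply Rle_trans; [apply Rmax_l|apply Rmax_r]).
    assert (tT2 : T2' <= t) by (eapply Rle_trans; [|exact Ht]; eapply Rle_trans; [apply Rmax_r|apply Rmax_r]).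
    assert (HXY : forall u, a <= u <= t - tau t -> A u <= X' + Y * exp (- 2 * gam * u)).
    { intros u Hu. destruct (Rle_lt_dec s u) as [su|su].
      - pose proof (Hs u su). pose proof (exp_pos (- 2 * gam * u)). nra.
      - pose proof (HK u (proj1 Hu)).
        assert (1 <= exp (2 * gam * s) * exp (- 2 * gam * u)).
        { rewrite <- exp_plus, <- exp_0. apply exp_le. nra. }
        unfold Y. nra. }
    pose proof (KEY t X' Y t1 X'p Yp HXY) as Kt.
    pose proof (HT1 t tT1). pose proof (HT2 t tT2).
    assert (E : beta * (e0 * Y + L0 * exp (2 * gam)) * exp (- gam * a) * exp (- gam * t) / gam = C * exp (- gam * t))
      by (unfold C; field; lra).
    assert (E2 : exp (- mu * (t - 1)) * A 1 = exp mu * A 1 * exp (- mu * t)).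
    { replace (- mu * (t - 1)) with (mu + - mu * t) by ring. rewrite exp_plus. ring. }
    lra. }
  assert (IT : forall k, exists s, forall t, s <= t -> A t <= 2 * b + K * (/ 2) ^ k + eps / 2).
  { induction k as [|k [s Hs]].
    - exists a. intros t Ht. simpl. pose proof (HK t Ht). lra.
    - assert (pk : 0 < (/ 2) ^ k) by (apply pow_lt; lra).
      destruct (STEP (2 * b + K * (/ 2) ^ k + eps / 2) s ltac:(nra) Hs (eps / 4) ltac:(lra)) as [T' HT'].
      exists T'. intros t Ht. pose proof (HT' t Ht). simpl. lra. }
  destruct (pow_lt_1_zero (/ 2) ltac:(rewrite Rabs_pos_eq; lra) (eps / (2 * (K + 1)))) as [N HN].
  { apply Rdiv_lt_0_compat; lra. }
  pose proof (HN N (Nat.le_refl N)) as HNN. rewrite Rabs_pos_eq in HNN by (apply pow_le; lra).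
  destruct (IT N) as [s Hs]. exists s. intros t Ht. pose proof (Hs t Ht).
  assert (K * (/ 2) ^ N <= eps / 2).
  { pose proof (pow_le (/ 2) N ltac:(lra)).
    apply Rle_trans with ((K + 1) * (/ 2) ^ N). nra.
    apply Rlt_le. apply Rmult_lt_reg_l with (/ (K + 1)). apply Rinv_0_lt_compat; lra.
    replace (/ (K + 1) * ((K + 1) * (/ 2) ^ N)) with ((/ 2) ^ N) by (field; lra).
    replace (/ (K + 1) * (eps / 2)) with (eps / (2 * (K + 1))) by (field; lra). exact HNN. }
  lra.
Qed.


Lemma sumR_ext m (g g' : nat -> R) : (forall j, (j < m)%nat -> g j = g' j) -> sumR m g = sumR m g'.
Proof.
  induction m; intros H; simpl; auto.
  rewrite IHm by (intros; apply H; lia). rewrite H by lia. auto.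
Qed.

Lemma sumR_nonneg m (g : nat -> R) : (forall j, (j < m)%nat -> 0 <= g j) -> 0 <= sumR m g.
Proof.
  induction m; intros H; simpl. lra.
  pose proof (IHm ltac:(intros; apply H; lia)). pose proof (H m ltac:(lia)). lra.
Qed.

Lemma sumR_ge m (g : nat -> R) : (forall j, (j < m)%nat -> 0 <= g j) ->
  forall k, (k < m)%nat -> g k <= sumR m g.
Proof.
  induction m; intros H k Hk. lia. simpl.
  destruct (Nat.eq_dec k m) as [e|e].
  - subst. pose proof (sumR_nonneg m g ltac:(intros; apply H; lia)). lra.
  - pose proof (IHm ltac:(intros; apply H; lia) k ltac:(lia)). pose proof (H m ltac:(lia)). lra.
Qed.

Lemma sumR_cont m (g : nat -> R -> R) x :
  (forall j, (j < m)%nat -> continuous (g j) x) ->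
  continuous (fun s => sumR m (fun j => g j s)) x.
Proof.
  induction m; intros H; simpl.
  - apply continuous_const.
  - apply (continuous_plus (fun s => sumR m (fun j => g j s)) (g m)).
    apply IHm; intros; apply H; lia. apply H; lia.
Qed.

Lemma fin_up n (P : nat -> R -> Prop) :
  (forall i x y, x <= y -> P i x -> P i y) ->
  (forall i, (i < n)%nat -> exists x, P i x) -> exists x, forall i, (i < n)%nat -> P i x.
Proof.
  intros Hm. induction n; intros H.
  - exists 0. intros; lia.
  - destruct IHn as [x Hx]. intros; apply H; lia.
    destruct (H n ltac:(lia)) as [y Hy].
    exists (Rmax x y). intros i Hi. destruct (Nat.eq_dec i n) as [e|e].
    + subst. apply Hm with y; auto. apply Rmax_r.
    + apply Hm with x. apply Rmax_l. apply Hx; lia.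
Qed.

Lemma deriv_of_dn (g : R -> R) t l : 0 < t -> deriv_nonneg g t l -> is_derive g t l.
Proof.
  intros tp H. apply is_derive_Reals. intros eps ep.
  destruct (H eps ep) as [d [dp Hd]].
  assert (mp : 0 < Rmin d t) by (apply Rmin_glb_lt; lra).
  exists (mkposreal _ mp). simpl. intros h hn hl. apply Hd; auto.
  - assert (Rabs h < t) by (eapply Rlt_le_trans; [exact hl| apply Rmin_r]).
    apply Rabs_def2 in H0. lra.
  - eapply Rlt_le_trans; [exact hl| apply Rmin_l].
Qed.

Lemma f_props (fi : R -> R) : f_hyp fi ->
  (forall x, continuous fi x) /\ (forall x y, x <= y -> fi y <= fi x) /\ (forall x, 0 < fi x) /\
  (forall eps, 0 < eps -> exists X, forall x, X <= x -> fi x < eps).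
Proof.
  intros [_ [[fi' [Hd [_ Hneg]]] [Hpos [Hlim _]]]].
  assert (Hc : forall x, continuous fi x).
  { intros x. apply (@ex_derive_continuous R_AbsRing R_NormedModule). exists (fi' x).
    apply is_derive_Reals. apply Hd. }
  split; [auto|split; [|split; [auto|]]].
  - intros x y xy. apply (deriv_nonpos_decr fi fi' x y xy).
    + intros; apply is_derive_Reals, Hd.
    + intros; apply Hneg.
    + intros; apply Hc.
  - intros eps ep. destruct (Hlim eps ep) as [X HX]. exists X. intros x Hx.
    pose proof (HX x Hx). pose proof (Rle_abs (fi x)). lra.
Qed.


Lemma Z_cont n zeta (A : nat -> R -> R) i : (forall j, (j < n)%nat -> continuity (A j)) ->
  forall x, continuous (Zof n zeta A i) x.
Proof.
  intros H x. unfold Zof. apply (sumR_cont n (fun j s => zeta i j * A j s)).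
  intros j Hj. apply (continuous_mult (fun _ => zeta i j) (A j)). apply continuous_const.
  apply continuity_pt_filterlim. apply H; auto.
Qed.

Lemma Z_nonneg n zeta (A : nat -> R -> R) i s : (forall j, (j < n)%nat -> 0 <= zeta i j) ->
  (forall j, (j < n)%nat -> 0 <= A j s) -> (i < n)%nat -> zeta i i * A i s <= Zof n zeta A i s.
Proof.
  intros Hz HA Hi. unfold Zof. apply (sumR_ge n (fun j => zeta i j * A j s)); auto.
  intros j Hj. apply Rmult_le_pos; auto.
Qed.

Lemma Z_eq_phi n zeta (A phi : nat -> R -> R) i s :
  (forall j, (j < n)%nat -> A j s = phi j s) -> Zof n zeta A i s = Zof n zeta phi i s.
Proof.
  intros H. unfold Zof. apply sumR_ext. intros j Hj. rewrite H; auto.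
Qed.

Lemma build_sig n muA muJ beta zeta f alpha delta phi tau0 A tau i :
  assumptionA n muA muJ beta zeta f -> (i < n)%nat ->
  in_D n alpha zeta f delta phi tau0 -> is_solution n muA muJ beta zeta f phi tau0 A tau ->
  sig_hyp (fun s => f i (Zof n zeta A i s)) (tau i) (tau0 i) /\
  RInt (fun s => f i (Zof n zeta A i s)) (- tau0 i) 0 = RInt (fun s => f i (Zof n zeta phi i s)) (- tau0 i) 0.
Proof.
  intros HA Hi HD HS.
  destruct (HA i Hi) as [_ [_ [_ [_ [_ Hf]]]]].
  destruct (f_props _ Hf) as [fc [fd [fp fl]]].
  destruct (HD i Hi) as [_ [t0p _]].
  assert (Acont : forall j, (j < n)%nat -> continuity (A j)) by (intros j Hj; apply (HS j Hj)).
  assert (Fc : forall x, continuous (fun s => f i (Zof n zeta A i s)) x).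
  { intros x. apply (continuous_comp (Zof n zeta A i) (f i)). apply Z_cont; auto. apply fc. }
  assert (E : RInt (fun s => f i (Zof n zeta A i s)) (- tau0 i) 0 = RInt (fun s => f i (Zof n zeta phi i s)) (- tau0 i) 0).
  { apply RInt_ext. intros x Hx. rewrite Rmax_right in Hx by lra.
    f_equal. apply Z_eq_phi. intros j Hj. apply (HS j Hj). lra. }
  split; auto.
  destruct (HS i Hi) as [_ [_ [_ [_ [Htp [_ Hint]]]]]].
  split; [auto|split; [intros; apply fp|split; [auto|split; [auto|]]]].
  intros t t0. destruct (Hint t t0) as [pr1 [pr2 Heq]].
  rewrite E, (RInt_Reals _ _ _ pr1), (RInt_Reals _ _ _ pr2). auto.
Qed.

Lemma build_spH n muA muJ beta zeta f alpha delta phi tau0 A tau i :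
  assumptionA n muA muJ beta zeta f -> (i < n)%nat -> 0 < delta ->
  in_D n alpha zeta f delta phi tau0 -> is_solution n muA muJ beta zeta f phi tau0 A tau ->
  spH (muA i) (muJ i) (beta i) (zeta i i) delta (tau0 i) (f i) (A i)
    (fun s => f i (Zof n zeta A i s)) (tau i).
Proof.
  intros HA Hi dp HD HS.
  destruct (build_sig n muA muJ beta zeta f alpha delta phi tau0 A tau i HA Hi HD HS) as [Hsig E].
  pose proof (HA i Hi) as [m1 [m2 [m3 [m4 [Hz Hf]]]]].
  destruct (f_props _ Hf) as [fc [fd [fp fl]]].
  destruct (HS i Hi) as [Ac [Ap [_ [_ [_ [Hder _]]]]]].
  constructor; auto.
  - intros x. apply continuity_pt_filterlim. apply Ac.
  - intros x. apply fd. apply Z_nonneg; auto. intros j Hj. apply (HS j Hj).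
  - rewrite E. destruct (HD i Hi) as [_ [_ [pr Hpr]]]. rewrite (RInt_Reals _ _ _ pr). auto.
  - intros t tp. apply deriv_of_dn; auto. apply Hder. lra.
Qed.

Theorem part2 (n : nat) (alpha : R) (muA muJ beta : nat -> R)
  (zeta : nat -> nat -> R) (f : nat -> R -> R) :
  assumptionA n muA muJ beta zeta f ->
  (forall delta, 0 < delta ->
     exists M, 0 < M /\
       forall (phi : nat -> R -> R) (tau0 : nat -> R) (A tau : nat -> R -> R),
         in_D n alpha zeta f delta phi tau0 ->
         (forall i, (i < n)%nat -> forall theta, theta <= 0 -> 0 <= phi i theta) ->
         (forall i, (i < n)%nat -> 0 < tau0 i) ->
         is_solution n muA muJ beta zeta f phi tau0 A tau ->
         forall eps, 0 < eps -> exists T, forall t, T <= t ->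
           forall i, (i < n)%nat -> A i t <= M + eps).
Proof.
  intros HA delta dp.
  destruct (fin_up n (fun i M => 0 < M /\ forall tau0 A F tau,
      spH (muA i) (muJ i) (beta i) (zeta i i) delta tau0 (f i) A F tau ->
      forall eps, 0 < eps -> exists T, forall t, T <= t -> A t <= M + eps)) as [M HM].
  - intros i x y xy [xp Hx]. split. lra. intros tau0 A F tau H eps ep.
    destruct (Hx tau0 A F tau H eps ep) as [T HT]. exists T. intros t Ht. pose proof (HT t Ht). lra.
  - intros i Hi. pose proof (HA i Hi) as [m1 [m2 [m3 [m4 [Hz Hf]]]]].
    destruct (f_props _ Hf) as [fc [fd [fp fl]]].
    apply (species_bound (muA i) (muJ i) (beta i) (zeta i i) delta (f i)); auto.
  - exists (Rmax M 1). split. pose proof (Rmax_r M 1). lra.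
    intros phi tau0 A tau HD _ _ HS eps ep.
    destruct (fin_up n (fun i T => forall t, T <= t -> A i t <= Rmax M 1 + eps)) as [T HT].
    + intros i x y xy Hx t Ht. apply Hx. lra.
    + intros i Hi. destruct (HM i Hi) as [_ HMi].
      destruct (HMi (tau0 i) (A i) _ (tau i)
        (build_spH n muA muJ beta zeta f alpha delta phi tau0 A tau i HA Hi dp HD HS) eps ep) as [T HT].
      exists T. intros t Ht. pose proof (HT t Ht). pose proof (Rmax_l M 1). lra.
    + exists T. intros t Ht i Hi. apply HT; auto.
Qed.


Lemma mvt_lip (g dg : R -> R) K a b : 0 <= K ->
  (forall x, a < x < b -> is_derive g x (dg x)) -> (forall x, a < x < b -> Rabs (dg x) <= K) ->
  (forall x, a <= x <= b -> continuous g x) ->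
  forall x y, a <= x <= b -> a <= y <= b -> Rabs (g y - g x) <= K * Rabs (y - x).
Proof.
  intros Kp Hd Hb Hc x y Hx Hy.
  destruct (MVT_gen g x y (fun s => Rmax (- K) (Rmin K (dg s)))) as [c [Hc1 Hc2]].
  - intros s Hs. assert (a < s < b).
    { unfold Rmin, Rmax in Hs. destruct (Rle_dec x y); lra. }
    pose proof (Hb s H). assert (- K <= dg s <= K) by (unfold Rabs in H0; destruct Rcase_abs in H0; lra).
    rewrite Rmin_right by lra. rewrite Rmax_right by lra. apply Hd; auto.
  - intros s Hs. apply continuity_pt_filterlim. apply Hc.
    unfold Rmin, Rmax in Hs. destruct (Rle_dec x y); lra.
  - rewrite Hc2, Rabs_mult. apply Rmult_le_compat_r. apply Rabs_pos.
    unfold Rmax, Rmin. repeat destruct Rle_dec; unfold Rabs; repeat destruct Rcase_abs; lra.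
Qed.

Lemma lip_glue (psi : R -> R) t L : 0 <= t -> 0 <= L ->
  (forall x y, x <= -t -> y <= -t -> Rabs (psi y - psi x) <= L * Rabs (y - x)) ->
  (forall x y, -t <= x <= 0 -> -t <= y <= 0 -> Rabs (psi y - psi x) <= L * Rabs (y - x)) ->
  forall x y, x <= 0 -> y <= 0 -> Rabs (psi y - psi x) <= L * Rabs (y - x).
Proof.
  intros tp Lp H1 H2.
  assert (W : forall x y, x <= y -> x <= 0 -> y <= 0 -> Rabs (psi y - psi x) <= L * Rabs (y - x)).
  { intros x y xy x0 y0.
    destruct (Rle_dec y (-t)) as [a|a]. apply H1; lra.
    destruct (Rle_dec (-t) x) as [b|b]. apply H2; lra.
    pose proof (H1 x (-t) ltac:(lra) ltac:(lra)). pose proof (H2 (-t) y ltac:(lra) ltac:(lra)).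
    replace (psi y - psi x) with ((psi y - psi (-t)) + (psi (-t) - psi x)) by ring.
    eapply Rle_trans. apply Rabs_triang.
    rewrite (Rabs_pos_eq (y - x)) by lra.
    rewrite (Rabs_pos_eq (y - -t)) in H0 by lra. rewrite (Rabs_pos_eq (-t - x)) in H by lra.
    nra. }
  intros x y x0 y0. destruct (Rle_dec x y). apply W; auto.
  rewrite Rabs_minus_sym, (Rabs_minus_sym y x). apply W; auto; lra.
Qed.

Lemma inX_of alpha (g : R -> R) L K :
  (forall x, continuous g x) -> 0 <= L ->
  (forall x y, x <= 0 -> y <= 0 ->
     Rabs (exp (- alpha * Rabs y) * g y - exp (- alpha * Rabs x) * g x) <= L * Rabs (y - x)) ->
  (forall x, x <= 0 -> Rabs (exp (- alpha * Rabs x) * g x) <= K) ->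
  in_X alpha g.
Proof.
  intros Hc Lp HL HK. unfold in_X. split; [|split; [|split]].
  - intros x _ eps ep. destruct (ed_of_cont g x (Hc x) eps ep) as [d [dp Hd]].
    exists d. split; auto.
  - exists K. auto.
  - intros eps ep. exists (eps / (L + 1)). split. apply Rdiv_lt_0_compat; lra.
    intros x y x0 y0 Hxy. eapply Rle_lt_trans. apply HL; auto.
    apply Rle_lt_trans with ((L + 1) * Rabs (y - x)).
    apply Rmult_le_compat_r. apply Rabs_pos. lra.
    apply Rmult_lt_reg_l with (/ (L + 1)). apply Rinv_0_lt_compat; lra.
    rewrite <- Rmult_assoc, Rinv_l, Rmult_1_l by lra.
    replace (/ (L + 1) * eps) with (eps / (L + 1)) by (unfold Rdiv; ring). auto.
  - exists L. intros x y x0 y0. apply HL; auto.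
Qed.

Lemma A_lip n muA muJ beta zeta f alpha delta phi tau0 A tau i t :
  assumptionA n muA muJ beta zeta f -> (i < n)%nat ->
  in_D n alpha zeta f delta phi tau0 -> is_solution n muA muJ beta zeta f phi tau0 A tau ->
  0 <= t ->
  exists K Am, 0 <= K /\ 0 <= Am /\
    (forall x y, 0 <= x <= t -> 0 <= y <= t -> Rabs (A i y - A i x) <= K * Rabs (y - x)) /\
    (forall x, - tau0 i <= x <= t -> A i x <= Am).
Proof.
  intros HA Hi HD HS t0.
  destruct (build_sig n muA muJ beta zeta f alpha delta phi tau0 A tau i HA Hi HD HS) as [Hsig _].
  pose proof Hsig as [HF [Hp [Ht0 [Htp Hint]]]].
  pose proof (HA i Hi) as [m1 [m2 [m3 [m4 [Hz Hf]]]]].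
  destruct (f_props _ Hf) as [fc [fd [fp fl]]].
  destruct (HS i Hi) as [Ac [Ap [_ [_ [_ [Hder _]]]]]].
  assert (Aall : forall j, (j < n)%nat -> continuity (A j)) by (intros j Hj; apply (HS j Hj)).
  assert (ab : - tau0 i <= t) by lra.
  destruct (continuity_ab_maj (A i) (- tau0 i) t ab) as [m [Hm Hmr]].
  { intros; apply Ac. }
  destruct (continuity_ab_maj (Zof n zeta A i) (- tau0 i) t ab) as [zm [Hzm Hzmr]].
  { intros; apply continuity_pt_filterlim. apply Z_cont; auto. }
  set (Am := A i m). set (Zm := Zof n zeta A i zm).
  assert (Amp : 0 <= Am) by apply Ap.
  set (F := fun s => f i (Zof n zeta A i s)).
  assert (Fup : forall s, F s <= f i 0).
  { intros s. unfold F. apply fd. unfold Zof. apply sumR_nonneg. intros j Hj.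
    apply Rmult_le_pos. apply Hz; auto. apply (HS j Hj). }
  assert (Flo : forall s, - tau0 i <= s <= t -> f i Zm <= F s).
  { intros s Hs. unfold F. apply fd. apply Hzm; auto. }
  assert (fZp : 0 < f i Zm) by apply fp.
  set (Kd := muA i * Am + beta i * (f i 0 / f i Zm) * Am).
  assert (Kdp : 0 <= Kd).
  { unfold Kd. pose proof (fp 0). assert (0 <= f i 0 / f i Zm) by (apply Rlt_le, Rdiv_lt_0_compat; auto). 
    apply Rplus_le_le_0_compat; [nra|]. apply Rmult_le_pos; [nra|auto]. }
  exists Kd, Am. split; auto. split; auto. split.
  2: { intros x Hx. apply Hm; auto. }
  apply (mvt_lip (A i) (fun s => - muA i * A i s + beta i * exp (- muJ i * tau i s) *
        (f i (Zof n zeta A i s) / f i (Zof n zeta A i (s - tau i s))) * A i (s - tau i s)) Kd 0 t Kdp).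
  - intros x Hx. apply deriv_of_dn. lra. apply Hder. lra.
  - intros x Hx. fold (F x). fold (F (x - tau i x)).
    assert (x0 : 0 <= x) by lra.
    pose proof (sig_lower _ _ _ Hsig x x0) as sl. pose proof (sig_le _ _ _ Hsig x x0) as su.
    pose proof (Htp x x0) as tp.
    assert (e1 : exp (- muJ i * tau i x) <= 1) by (rewrite <- exp_0; apply exp_le; nra).
    pose proof (exp_pos (- muJ i * tau i x)) as e1p.
    assert (q1 : F x / F (x - tau i x) <= f i 0 / f i Zm).
    { pose proof (Flo (x - tau i x) ltac:(lra)). pose proof (Fup x). pose proof (Hp x).
      pose proof (Hp (x - tau i x)).
      unfold Rdiv. fold (F x) (F (x - tau i x)) in H1, H2.
      assert (/ F (x - tau i x) <= / f i Zm) by (apply Rinv_le_contravar; auto).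
      assert (0 < / F (x - tau i x)) by (apply Rinv_0_lt_compat; auto).
      assert (F x * / F (x - tau i x) <= f i 0 * / F (x - tau i x)) by (apply Rmult_le_compat_r; lra).
      assert (0 <= f i 0) by (apply Rlt_le, fp).
      assert (f i 0 * / F (x - tau i x) <= f i 0 * / f i Zm) by (apply Rmult_le_compat_l; lra).
      lra. }
    assert (q0 : 0 <= F x / F (x - tau i x)) by (apply Rlt_le, Rdiv_lt_0_compat; apply Hp).
    assert (a1 : A i x <= Am) by (apply Hm; lra).
    assert (a2 : A i (x - tau i x) <= Am) by (apply Hm; lra).
    pose proof (Ap x). pose proof (Ap (x - tau i x)).
    assert (T2 : 0 <= beta i * exp (- muJ i * tau i x) * (F x / F (x - tau i x)) * A i (x - tau i x)).
    { apply Rmult_le_pos; [|auto]. apply Rmult_le_pos; [nra|auto]. }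
    assert (T2b : beta i * exp (- muJ i * tau i x) * (F x / F (x - tau i x)) * A i (x - tau i x)
       <= beta i * (f i 0 / f i Zm) * Am).
    { apply Rmult_le_compat; auto. apply Rmult_le_pos; [nra|auto].
      apply Rmult_le_compat; try nra. }
    assert (T1 : muA i * A i x <= muA i * Am) by nra.
    unfold Kd. unfold Rabs. destruct Rcase_abs; nra.
  - intros x Hx. apply continuity_pt_filterlim. apply Ac.
Qed.


Lemma exp_lip alpha : 0 < alpha -> forall x y, x <= 0 -> y <= 0 ->
  Rabs (exp (alpha * y) - exp (alpha * x)) <= alpha * Rabs (y - x).
Proof.
  intros ap x y x0 y0.
  apply (mvt_lip (fun u => exp (alpha * u)) (fun u => alpha * exp (alpha * u)) alpha (Rmin x y) 0).
  - lra.
  - intros; apply dexp.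
  - intros u Hu. rewrite Rabs_pos_eq. 2: pose proof (exp_pos (alpha * u)); nra.
    assert (exp (alpha * u) <= 1) by (rewrite <- exp_0; apply exp_le; nra). nra.
  - intros; apply cexp.
  - split. apply Rmin_l. auto.
  - split. apply Rmin_r. auto.
Qed.

Lemma shift_inX n muA muJ beta zeta f alpha delta phi tau0 A tau i t :
  assumptionA n muA muJ beta zeta f -> 0 < alpha -> (i < n)%nat ->
  in_D n alpha zeta f delta phi tau0 -> is_solution n muA muJ beta zeta f phi tau0 A tau ->
  0 <= t -> in_X alpha (fun theta => A i (t + theta)).
Proof.
  intros HA ap Hi HD HS t0.
  destruct (A_lip n muA muJ beta zeta f alpha delta phi tau0 A tau i t HA Hi HD HS t0)
    as [K [Am [Kp [Amp [HK HAm]]]]].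
  destruct (HD i Hi) as [[_ [[Kf HKf] [_ [Lf HLf]]]] [t0p _]].
  destruct (HS i Hi) as [Ac [Ap [Aphi _]]].
  set (L := Rmax (K + alpha * Am) (Rabs Lf)).
  assert (Lp : 0 <= L) by (eapply Rle_trans; [apply Rabs_pos| apply Rmax_r]).
  set (psi := fun x => exp (- alpha * Rabs x) * A i (t + x)).
  assert (Eneg : forall x, x <= -t -> psi x = exp (- alpha * t) * (exp (- alpha * Rabs (t + x)) * phi i (t + x))).
  { intros x Hx. unfold psi. rewrite Aphi by lra.
    rewrite (Rabs_left1 x) by lra. rewrite (Rabs_left1 (t + x)) by lra.
    rewrite <- Rmult_assoc, <- exp_plus. f_equal. f_equal. ring. }
  assert (Epos : forall x, -t <= x <= 0 -> psi x = exp (alpha * x) * A i (t + x)).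
  { intros x Hx. unfold psi. rewrite (Rabs_left1 x) by lra. f_equal. f_equal. ring. }
  assert (et : exp (- alpha * t) <= 1) by (rewrite <- exp_0; apply exp_le; nra).
  pose proof (exp_pos (- alpha * t)) as etp.
  assert (HL : forall x y, x <= 0 -> y <= 0 -> Rabs (psi y - psi x) <= L * Rabs (y - x)).
  { apply (lip_glue psi t L t0 Lp).
    - intros x y x0 y0. rewrite (Eneg x x0), (Eneg y y0).
      rewrite <- Rmult_minus_distr_l, Rabs_mult, (Rabs_pos_eq (exp _)) by lra.
      pose proof (HLf (t + x) (t + y) ltac:(lra) ltac:(lra)) as H.
      replace (t + y - (t + x)) with (y - x) in H by ring.
      assert (Lf <= L) by (eapply Rle_trans; [apply Rle_abs| apply Rmax_r]).
      pose proof (Rabs_pos (y - x)).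
      pose proof (Rabs_pos (exp (- alpha * Rabs (t + y)) * phi i (t + y) - exp (- alpha * Rabs (t + x)) * phi i (t + x))).
      apply Rle_trans with (1 * (Lf * Rabs (y - x))). apply Rmult_le_compat; lra. nra.
    - intros x y Hx Hy. rewrite (Epos x Hx), (Epos y Hy).
      replace (exp (alpha * y) * A i (t + y) - exp (alpha * x) * A i (t + x)) with
        (exp (alpha * y) * (A i (t + y) - A i (t + x)) + A i (t + x) * (exp (alpha * y) - exp (alpha * x))) by ring.
      eapply Rle_trans. apply Rabs_triang. rewrite !Rabs_mult.
      rewrite (Rabs_pos_eq (exp _)) by (apply Rlt_le, exp_pos).
      rewrite (Rabs_pos_eq (A i (t + x))) by apply Ap.
      pose proof (HK (t + x) (t + y) ltac:(lra) ltac:(lra)) as H1.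
      replace (t + y - (t + x)) with (y - x) in H1 by ring.
      pose proof (exp_lip alpha ap x y ltac:(lra) ltac:(lra)) as H2.
      assert (ey : exp (alpha * y) <= 1) by (rewrite <- exp_0; apply exp_le; nra).
      pose proof (exp_pos (alpha * y)).
      assert (Ax : A i (t + x) <= Am) by (apply HAm; lra). pose proof (Ap (t + x)).
      assert (K + alpha * Am <= L) by apply Rmax_l.
      pose proof (Rabs_pos (y - x)). pose proof (Rabs_pos (A i (t + y) - A i (t + x))).
      pose proof (Rabs_pos (exp (alpha * y) - exp (alpha * x))).
      assert (exp (alpha * y) * Rabs (A i (t + y) - A i (t + x)) <= K * Rabs (y - x)) by nra.
      assert (A i (t + x) * Rabs (exp (alpha * y) - exp (alpha * x)) <= Am * (alpha * Rabs (y - x))) by nra.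
      nra. }
  apply (inX_of alpha (fun theta => A i (t + theta)) L (Rabs Kf + Rabs (psi 0) + L * t)).
  - intros x. apply (continuous_comp (fun th => t + th) (A i)).
    apply (continuous_plus (fun _ => t) (fun th => th)). apply continuous_const. apply continuous_id.
    apply continuity_pt_filterlim. apply Ac.
  - auto.
  - exact HL.
  - intros x x0. fold (psi x). destruct (Rle_dec x (-t)) as [a|a].
    + rewrite (Eneg x a), Rabs_mult, (Rabs_pos_eq (exp _)) by lra.
      pose proof (HKf (t + x) ltac:(lra)). pose proof (Rle_abs Kf).
      pose proof (Rabs_pos (psi 0)). pose proof (Rabs_pos (exp (- alpha * Rabs (t + x)) * phi i (t + x))).
      assert (exp (- alpha * t) * Rabs (exp (- alpha * Rabs (t + x)) * phi i (t + x)) <= Kf) by nra.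
      nra.
    + pose proof (HL x 0 x0 (Rle_refl 0)) as H.
      rewrite Rabs_minus_sym in H. replace (0 - x) with (-x) in H by ring. rewrite Rabs_Ropp in H.
      rewrite (Rabs_left1 x) in H by lra.
      pose proof (Rabs_triang_inv (psi x) (psi 0)). pose proof (Rabs_pos Kf).
      assert (L * - x <= L * t) by nra. lra.
Qed.


Lemma part1 (n : nat) (alpha : R) (muA muJ beta : nat -> R)
  (zeta : nat -> nat -> R) (f : nat -> R -> R) :
  assumptionA n muA muJ beta zeta f -> 0 < alpha ->
  (forall delta, 0 <= delta ->
     forall (phi : nat -> R -> R) (tau0 : nat -> R) (A tau : nat -> R -> R),
       in_D n alpha zeta f delta phi tau0 ->
       is_solution n muA muJ beta zeta f phi tau0 A tau ->
       forall t, 0 <= t ->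
         in_D n alpha zeta f delta (fun i theta => A i (t + theta)) (fun i => tau i t)).
Proof.
  intros HA ap delta d0 phi tau0 A tau HD HS t t0 i Hi.
  split; [|split].
  - apply (shift_inX n muA muJ beta zeta f alpha delta phi tau0 A tau i t); auto.
  - apply (HS i Hi); auto.
  - destruct (build_sig n muA muJ beta zeta f alpha delta phi tau0 A tau i HA Hi HD HS) as [Hsig E].
    pose proof Hsig as [HF [Hp [Ht0 [Htp Hint]]]].
    set (F := fun s => f i (Zof n zeta A i s)) in *.
    set (g := fun s => f i (Zof n zeta (fun i theta => A i (t + theta)) i s)).
    assert (Hg : forall s, g s = F (t + s)) by reflexivity.
    assert (gc : forall x, continuous g x).
    { intros x. apply (continuous_ext (fun s => F (t + s))). intros; auto.
      apply (continuous_comp (fun s => t + s) F).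
      apply (continuous_plus (fun _ => t) (fun th => th)). apply continuous_const. apply continuous_id.
      apply HF. }
    pose proof (cont_exR g gc (- tau i t) 0) as ex.
    exists (ex_RInt_Reals_0 _ _ _ ex). rewrite <- RInt_Reals.
    assert (Eg : RInt g (- tau i t) 0 = RInt F (t - tau i t) t).
    { transitivity (RInt (fun y => scal 1 (F (1 * y + t))) (- tau i t) 0).
      - apply RInt_ext. intros x _. rewrite Hg.
        change (scal 1 (F (1 * x + t))) with (1 * F (1 * x + t)).
        replace (1 * x + t) with (t + x) by ring. symmetry. apply Rmult_1_l.
      - eapply eq_trans. apply (RInt_comp_lin F 1 t (- tau i t) 0).
        + apply cont_exR; auto.
        + replace (1 * - tau i t + t) with (t - tau i t) by ring. replace (1 * 0 + t) with t by ring. reflexivity. }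
    rewrite Eg, (Hint t t0), E.
    destruct (HD i Hi) as [_ [_ [pr Hpr]]]. rewrite (RInt_Reals _ _ _ pr). auto.
Qed.


Theorem mainTheorem8 (n : nat) (alpha : R) (muA muJ beta : nat -> R)
  (zeta : nat -> nat -> R) (f : nat -> R -> R) :
  assumptionA n muA muJ beta zeta f -> 0 < alpha ->
  (forall delta, 0 <= delta ->
     forall (phi : nat -> R -> R) (tau0 : nat -> R) (A tau : nat -> R -> R),
       in_D n alpha zeta f delta phi tau0 ->
       is_solution n muA muJ beta zeta f phi tau0 A tau ->
       forall t, 0 <= t ->
         in_D n alpha zeta f delta (fun i theta => A i (t + theta)) (fun i => tau i t))
  /\
  (forall delta, 0 < delta ->
     exists M, 0 < M /\
       forall (phi : nat -> R -> R) (tau0 : nat -> R) (A tau : nat -> R -> R),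
         in_D n alpha zeta f delta phi tau0 ->
         (forall i, (i < n)%nat -> forall theta, theta <= 0 -> 0 <= phi i theta) ->
         (forall i, (i < n)%nat -> 0 < tau0 i) ->
         is_solution n muA muJ beta zeta f phi tau0 A tau ->
         (* limsup_{t -> +oo} max_i A_i(t) <= M *)
         forall eps, 0 < eps -> exists T, forall t, T <= t ->
           forall i, (i < n)%nat -> A i t <= M + eps).
Proof.
  intros HA ap. split.
  - apply (part1 n alpha muA muJ beta zeta f HA ap).
  - apply (part2 n alpha muA muJ beta zeta f HA).
Qed.
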